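(* Let ${\bf D}$ be an $L\times N$ complex matrix with $L=Rd$, $N=Md$, whose columns have unit Euclidean norm, partitioned into consecutive column-blocks ${\bf D}[1],\dots,{\bf D}[M]$ of size $L\times d$, and assume ${\bf D}{\bf g}\neq{\bf 0}$ for every nonzero block $2k$-sparse ${\bf g}\in\mathbb{C}^N$. Let $\mu_{\mathrm B}>0$ be the block-coherence and $\nu$ the sub-coherence of ${\bf D}$. If $$kd<\frac12\left(\mu_{\mathrm B}^{-1}+d-(d-1)\frac{\nu}{\mu_{\mathrm B}}\right),$$ then for every set $\Lambda_0$ of $k$ block indices, letting ${\bf D}_0$ be the $L\times(kd)$ matrix formed by the blocks ${\bf D}[\ell]$, $\ell\in\Lambda_0$, and $\overline{{\bf D}}_0$ the matrix formed by the remaining blocks, we have $\rho_c({\bf D}_0^\dagger\overline{{\bf D}}_0)<1$.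
   Context: $\rho(\cdot)$ is the spectral norm, ${\bf A}^\dagger$ the Moore–Penrose pseudo-inverse. Block-coherence: $\mu_{\mathrm B}=\max_{\ell, r\neq\ell}\frac1d\rho({\bf D}^H[\ell]{\bf D}[r])$. Sub-coherence: $\nu=\max_\ell\max_{i,j\neq i}|{\bf d}_i^H{\bf d}_j|$ with ${\bf d}_i,{\bf d}_j$ columns of the same block ${\bf D}[\ell]$ ($\nu=0$ if $d=1$). For a matrix ${\bf A}$ whose dimensions are multiples of $d$, with $(\ell,r)$th $d\times d$ block ${\bf A}[\ell,r]$, $\rho_c({\bf A})=\max_r\sum_\ell\rho({\bf A}[\ell,r])$. A vector in $\mathbb{C}^N$ is block $2k$-sparse if at most $2k$ of its consecutive length-$d$ blocks are nonzero. *)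

(* Defs.v *)
From HB Require Import structures.
From mathcomp Require Import all_boot all_order all_algebra.
From mathcomp Require Import all_classical reals.
From mathcomp.real_closed Require Import complex.
Set Implicit Arguments.
Unset Strict Implicit.
Unset Printing Implicit Defensive.
Import Order.TTheory GRing.Theory Num.Theory.
Local Open Scope ring_scope.

Section BlockDefs.
Variable R : realType.
Local Notation C := (R[i]).

Definition cnorm (z : C) : R := Normc.normc z.

Definition adjmx m n (A : 'M[C]_(m, n)) : 'M[C]_(n, m) :=
  \matrix_(i, j) conjc (A j i).

Definition vnorm n (x : 'cV[C]_n) : R :=
  Num.sqrt (\sum_i cnorm (x i ord0) ^+ 2).

Definition specnorm m n (A : 'M[C]_(m, n)) : R :=
  sup [set vnorm (A *m x) | x in [set x : 'cV[C]_n | vnorm x <= 1]]%classic.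

Definition penrose m n (A : 'M[C]_(m, n)) (X : 'M[C]_(n, m)) : Prop :=
  [/\ A *m X *m A = A, X *m A *m X = X,
      adjmx (A *m X) = A *m X & adjmx (X *m A) = X *m A].

Definition mp_pinv m n (A : 'M[C]_(m, n)) : 'M[C]_(n, m) :=
  xget 0 [set X | penrose A X]%classic.

Definition mblock d p q (A : 'M[C]_(p * d, q * d)) (l : 'I_p) (r : 'I_q)
  : 'M[C]_d := \matrix_(i, j) A (mxvec_index l i) (mxvec_index r j).

Definition rho_c d p q (A : 'M[C]_(p * d, q * d)) : R :=
  \big[Num.max/0]_(r < q) \sum_(l < p) specnorm (mblock A l r).

Definition colblock L d M (D : 'M[C]_(L, M * d)) (l : 'I_M) : 'M[C]_(L, d) :=
  \matrix_(i, j) D i (mxvec_index l j).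

Definition block_coherence L d M (D : 'M[C]_(L, M * d)) : R :=
  \big[Num.max/0]_(l < M) \big[Num.max/0]_(r < M | r != l)
     (specnorm (adjmx (colblock D l) *m colblock D r) / d%:R).

Definition sub_coherence L d M (D : 'M[C]_(L, M * d)) : R :=
  \big[Num.max/0]_(l < M) \big[Num.max/0]_(i < d) \big[Num.max/0]_(j < d | j != i)
     cnorm (\sum_t conjc (D t (mxvec_index l i)) * D t (mxvec_index l j)).

Definition blk_support d M (g : 'cV[C]_(M * d)) : {set 'I_M} :=
  [set l | [exists j : 'I_d, g (mxvec_index l j) ord0 != 0]].

End BlockDefs.

Lemma blockof_proof m d (c : 'I_(m * d)) : (c %/ d < m)%N.
Proof.
case: d c => [|d] c; first by case: c => c; rewrite muln0.
by rewrite ltn_divLR.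
Qed.

Lemma inblock_proof m d (c : 'I_(m * d)) : (c %% d < d)%N.
Proof.
case: d c => [|d] c; first by case: c => c; rewrite muln0.
by rewrite ltn_pmod.
Qed.

Definition blockof m d (c : 'I_(m * d)) : 'I_m := Ordinal (blockof_proof c).
Definition inblock m d (c : 'I_(m * d)) : 'I_d := Ordinal (inblock_proof c).

(* column indices of the blocks in S, blocks taken in increasing order *)
Definition selcols M d (S : {set 'I_M}) (c : 'I_(#|S| * d)) : 'I_(M * d) :=
  mxvec_index (enum_val (blockof c)) (inblock c).

Definition subblocks (R : realType) L M d (D : 'M[R[i]]_(L, M * d))
  (S : {set 'I_M}) : 'M[R[i]]_(L, #|S| * d) :=
  colsub (@selcols M d S) D.

(* Main.v *)
Require Import Defs.
From HB Require Import structures.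
From mathcomp Require Import all_boot all_order all_algebra.
From mathcomp Require Import all_classical reals.
From mathcomp.real_closed Require Import complex.
From mathcomp Require Import ring lra.
Set Implicit Arguments.
Unset Strict Implicit.
Unset Printing Implicit Defensive.
Import Order.TTheory GRing.Theory Num.Theory.
Local Open Scope complex_scope.
Local Open Scope ring_scope.

Section Part1.
Variable R : realType.
Local Notation C := (R[i]).

Lemma CS n (u v : 'I_n -> R) :
  (\sum_i u i * v i) ^+ 2 <= (\sum_i u i ^+ 2) * (\sum_i v i ^+ 2).
Proof.
have H : 0 <= \sum_i \sum_j (u i * v j - u j * v i) ^+ 2.
  by apply: sumr_ge0 => i _; apply: sumr_ge0 => j _; apply: sqr_ge0.
have E : \sum_i \sum_j (u i * v j - u j * v i) ^+ 2 =
   2%:R * ((\sum_i u i ^+ 2) * (\sum_i v i ^+ 2) - (\sum_i u i * v i) ^+ 2).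
  have E1 : \sum_i \sum_j (u i * v j - u j * v i) ^+ 2 =
     \sum_i \sum_j (u i ^+ 2 * v j ^+ 2) + \sum_i \sum_j (u j ^+ 2 * v i ^+ 2)
     - 2%:R * \sum_i \sum_j (u i * v i) * (u j * v j).
    rewrite mulr_sumr -big_split -sumrB /=; apply: eq_bigr => i _.
    rewrite mulr_sumr -big_split -sumrB /=; apply: eq_bigr => j _.
    ring.
  rewrite E1 [X in _ + X - _]exchange_big /=.
  have F : forall a b : 'I_n -> R, \sum_i \sum_j a i * b j = (\sum_i a i) * (\sum_i b i).
    move=> a b; rewrite mulr_suml; apply: eq_bigr => i _; by rewrite mulr_sumr.
  rewrite !F expr2; ring.
have : 0 <= 2%:R * ((\sum_i u i ^+ 2) * (\sum_i v i ^+ 2) - (\sum_i u i * v i) ^+ 2)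
  by rewrite -E.
rewrite pmulr_rge0 ?ltr0n // subr_ge0 //.
Qed.


Lemma cnorm_ge0 (z : C) : 0 <= cnorm z.
Proof. by case: z => a b; rewrite /cnorm /=; apply: sqrtr_ge0. Qed.

Lemma cnormM (a b : C) : cnorm (a * b) = cnorm a * cnorm b.
Proof. exact: Normc.normcM. Qed.

Lemma cnormD (a b : C) : cnorm (a + b) <= cnorm a + cnorm b.
Proof. exact: le_normcD. Qed.

Lemma cnormN (a : C) : cnorm (- a) = cnorm a.
Proof. exact: normcN. Qed.

Lemma cnorm0 : cnorm (0 : C) = 0.
Proof. exact: Normc.normc0. Qed.

Lemma cnorm_eq0 (a : C) : cnorm a = 0 -> a = 0.
Proof. exact: Normc.eq0_normc. Qed.

Lemma cnorm_conj (a : C) : cnorm (conjc a) = cnorm a.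
Proof. by case: a => x y; rewrite /cnorm /= sqrrN. Qed.

Lemma conj_mul_self (a : C) : conjc a * a = (cnorm a ^+ 2)%:C.
Proof.
case: a => x y; rewrite /cnorm /= sqr_sqrtr ?addr_ge0 ?sqr_ge0 //.
rewrite /GRing.mul /= /mulc /=; apply/eqP; rewrite eq_complex /=.
apply/andP; split; apply/eqP; ring.
Qed.

Lemma cnorm_real (k : R) : cnorm k%:C = `|k|.
Proof. by rewrite /cnorm /= expr0n /= addr0 sqrtr_sqr. Qed.

Lemma cnorm_sum I (r : seq I) (P : pred I) (F : I -> C) :
  cnorm (\sum_(i <- r | P i) F i) <= \sum_(i <- r | P i) cnorm (F i).
Proof.
elim/big_rec2: _ => [|i y1 y2 _ IH]; first by rewrite cnorm0.
by apply: le_trans (cnormD _ _) _; rewrite lerD2l.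
Qed.

Lemma vnorm_ge0 n (x : 'cV[C]_n) : 0 <= vnorm x.
Proof. exact: sqrtr_ge0. Qed.

Lemma vnorm_sqr n (x : 'cV[C]_n) : vnorm x ^+ 2 = \sum_i cnorm (x i ord0) ^+ 2.
Proof. by rewrite sqr_sqrtr // sumr_ge0 // => i _; rewrite sqr_ge0. Qed.

Lemma sqr_le_nonneg (a b : R) : 0 <= b -> a ^+ 2 <= b ^+ 2 -> a <= b.
Proof. move=> hb h; nra. Qed.

Lemma vnorm_le n (x : 'cV[C]_n) (c : R) : 0 <= c ->
  \sum_i cnorm (x i ord0) ^+ 2 <= c ^+ 2 -> vnorm x <= c.
Proof. by move=> hc h; apply: sqr_le_nonneg => //; rewrite vnorm_sqr. Qed.

Lemma vnorm0 n : vnorm (0 : 'cV[C]_n) = 0.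
Proof.
rewrite /vnorm big1 ?sqrtr0 // => i _; by rewrite mxE cnorm0 expr0n.
Qed.

Lemma vnorm_eq0 n (x : 'cV[C]_n) : vnorm x = 0 -> x = 0.
Proof.
move=> h; have h2 : \sum_i cnorm (x i ord0) ^+ 2 = 0 by rewrite -vnorm_sqr h expr0n.
apply/matrixP => i j; rewrite ord1 mxE.
have := psumr_eq0P (fun i _ => sqr_ge0 (cnorm (x i ord0))) h2 (i := i) isT.
by move/eqP; rewrite sqrf_eq0 => /eqP /cnorm_eq0.
Qed.

Lemma vnormN n (x : 'cV[C]_n) : vnorm (- x) = vnorm x.
Proof. by rewrite /vnorm; congr Num.sqrt; apply: eq_bigr => i _; rewrite mxE cnormN. Qed.

Lemma vnormZ n (x : 'cV[C]_n) (k : R) : vnorm (k%:C *: x) = `|k| * vnorm x.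
Proof.
rewrite /vnorm -sqrtr_sqr -sqrtrM ?sqr_ge0 //; congr Num.sqrt.
rewrite mulr_sumr; apply: eq_bigr => i _; rewrite mxE cnormM cnorm_real.
by rewrite exprMn real_normK ?num_real.
Qed.

Lemma cnorm_le_vnorm n (x : 'cV[C]_n) i : cnorm (x i ord0) <= vnorm x.
Proof.
apply: sqr_le_nonneg; first exact: vnorm_ge0.
rewrite vnorm_sqr (bigD1 i) //= lerDl; apply: sumr_ge0 => j _; exact: sqr_ge0.
Qed.

Lemma sum_prod_le n (a b : 'I_n -> R) :
  (forall i, 0 <= a i) -> (forall i, 0 <= b i) ->
  \sum_i a i * b i <= Num.sqrt (\sum_i a i ^+ 2) * Num.sqrt (\sum_i b i ^+ 2).
Proof.
move=> ha hb; apply: sqr_le_nonneg.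
  by rewrite mulr_ge0 ?sqrtr_ge0.
rewrite exprMn !sqr_sqrtr ?CS // sumr_ge0 // => i _; exact: sqr_ge0.
Qed.

Lemma vnormD n (x y : 'cV[C]_n) : vnorm (x + y) <= vnorm x + vnorm y.
Proof.
apply: vnorm_le; first by rewrite addr_ge0 ?vnorm_ge0.
apply: (@le_trans _ _ (\sum_i (cnorm (x i ord0) + cnorm (y i ord0)) ^+ 2)).
  apply: ler_sum => i _; rewrite mxE.
  rewrite ler_pXn2r ?nnegrE ?cnorm_ge0 ?addr_ge0 ?cnorm_ge0 //; exact: cnormD.
have E : \sum_i (cnorm (x i ord0) + cnorm (y i ord0)) ^+ 2 =
   \sum_i cnorm (x i ord0) ^+ 2 + \sum_i cnorm (y i ord0) ^+ 2 +
   2%:R * \sum_i cnorm (x i ord0) * cnorm (y i ord0).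
  rewrite mulr_sumr -!big_split /=; apply: eq_bigr => i _; ring.
rewrite E -!vnorm_sqr.
have := @sum_prod_le n (fun i => cnorm (x i ord0)) (fun i => cnorm (y i ord0))
  (fun i => cnorm_ge0 (x i ord0)) (fun i => cnorm_ge0 (y i ord0)).
rewrite -/(vnorm x) -/(vnorm y) => h.
nra.
Qed.


Definition frob m n (A : 'M[C]_(m, n)) := Num.sqrt (\sum_i \sum_j cnorm (A i j) ^+ 2).

Lemma frob_ge0 m n (A : 'M[C]_(m, n)) : 0 <= frob A.
Proof. exact: sqrtr_ge0. Qed.

Lemma vnorm_mul_frob m n (A : 'M[C]_(m, n)) x : vnorm (A *m x) <= frob A * vnorm x.
Proof.
apply: vnorm_le; first by rewrite mulr_ge0 ?frob_ge0 ?vnorm_ge0.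
rewrite exprMn /frob sqr_sqrtr; last first.
  by apply: sumr_ge0 => i _; apply: sumr_ge0 => j _; apply: sqr_ge0.
rewrite mulr_suml; apply: ler_sum => i _; rewrite mxE.
have h1 : cnorm (\sum_j A i j * x j ord0) <=
    Num.sqrt (\sum_j cnorm (A i j) ^+ 2) * vnorm x.
  apply: le_trans (cnorm_sum _ _ _) _.
  under eq_bigr => j _ do rewrite cnormM.
  exact: (@sum_prod_le n (fun j => cnorm (A i j)) (fun j => cnorm (x j ord0))
     (fun j => cnorm_ge0 _) (fun j => cnorm_ge0 _)).
rewrite -[X in X * _](@sqr_sqrtr _ (\sum_j cnorm (A i j) ^+ 2)); last first.
  by apply: sumr_ge0 => j _; apply: sqr_ge0.
rewrite -exprMn ler_pXn2r ?nnegrE ?cnorm_ge0 ?mulr_ge0 ?sqrtr_ge0 ?vnorm_ge0 //.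
Qed.

Definition snset m n (A : 'M[C]_(m, n)) :=
  [set vnorm (A *m x) | x in [set x : 'cV[C]_n | vnorm x <= 1]]%classic.

Lemma snset_has_sup m n (A : 'M[C]_(m, n)) : has_sup (snset A).
Proof.
split.
  exists (vnorm (A *m 0)); exists 0 => //=; by rewrite vnorm0 ler01.
exists (frob A) => y [x /= hx <-].
apply: le_trans (vnorm_mul_frob A x) _.
by rewrite ler_piMr ?frob_ge0.
Qed.

Lemma specnorm_ub m n (A : 'M[C]_(m, n)) x : vnorm x <= 1 -> vnorm (A *m x) <= specnorm A.
Proof.
move=> hx; apply: (sup_upper_bound (snset_has_sup A)).
by exists x.
Qed.

Lemma specnorm_le m n (A : 'M[C]_(m, n)) c :
  (forall x, vnorm x <= 1 -> vnorm (A *m x) <= c) -> specnorm A <= c.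
Proof.
move=> h; apply: ge_sup; first exact: (snset_has_sup A).1.
by move=> y [x /= hx <-]; apply: h.
Qed.

Lemma specnorm_ge0 m n (A : 'M[C]_(m, n)) : 0 <= specnorm A.
Proof.
have h : vnorm (0 : 'cV[C]_n) <= 1 by rewrite vnorm0 ler01.
by have := specnorm_ub A h; rewrite mulmx0 vnorm0.
Qed.

Lemma specnorm_bound m n (A : 'M[C]_(m, n)) x : vnorm (A *m x) <= specnorm A * vnorm x.
Proof.
have [h0|hn] := eqVneq (vnorm x) 0.
  by rewrite h0 mulr0 (vnorm_eq0 h0) mulmx0 vnorm0.
have tpos : 0 < vnorm x by rewrite lt_def hn vnorm_ge0.
set t := vnorm x in tpos hn *.
have hy : vnorm ((t^-1)%:C *: x) <= 1.
  by rewrite vnormZ ger0_norm ?invr_ge0 ?vnorm_ge0 // mulVf.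
have := specnorm_ub A hy.
rewrite -scalemxAr vnormZ ger0_norm ?invr_ge0 ?vnorm_ge0 // => h.
by rewrite -ler_pdivrMr // mulrC.
Qed.

Lemma specnormD m n (A B : 'M[C]_(m, n)) : specnorm (A + B) <= specnorm A + specnorm B.
Proof.
apply: specnorm_le => x hx; rewrite mulmxDl.
apply: le_trans (vnormD _ _) _; apply: lerD.
  by apply: specnorm_ub.
by apply: specnorm_ub.
Qed.

Lemma specnormM m n p (A : 'M[C]_(m, n)) (B : 'M[C]_(n, p)) :
  specnorm (A *m B) <= specnorm A * specnorm B.
Proof.
apply: specnorm_le => x hx; rewrite -mulmxA.
apply: le_trans (specnorm_bound _ _) _.
by rewrite ler_wpM2l ?specnorm_ge0 // specnorm_ub.
Qed.

Lemma specnormN m n (A : 'M[C]_(m, n)) : specnorm (- A) <= specnorm A.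
Proof.
apply: specnorm_le => x hx; rewrite mulNmx vnormN; exact: specnorm_ub.
Qed.

Lemma specnorm1 n : specnorm (1%:M : 'M[C]_n) <= 1.
Proof. by apply: specnorm_le => x hx; rewrite mul1mx. Qed.

Lemma specnorm0 m n : specnorm (0 : 'M[C]_(m, n)) <= 0.
Proof. by apply: specnorm_le => x hx; rewrite mul0mx vnorm0. Qed.

Lemma specnorm_eq0 m n (A : 'M[C]_(m, n)) : specnorm A <= 0 -> A = 0.
Proof.
move=> h; apply/matrixP => i j; rewrite mxE.
have h1 : vnorm (A *m delta_mx j 0) <= 0.
  apply: le_trans (specnorm_bound _ _) _.
  by rewrite mulr_le0_ge0 ?vnorm_ge0.
have h2 : vnorm (A *m delta_mx j 0) = 0 by apply/eqP; rewrite eq_le h1 vnorm_ge0.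
have := vnorm_eq0 h2; rewrite -colE => /matrixP /(_ i 0).
by rewrite !mxE.
Qed.

End Part1.

Lemma nth_allpairs_pair (A B : Type) (s : seq A) (t : seq B) x0 i j :
  (i < size s)%N -> (j < size t)%N ->
  nth x0 [seq (x, y) | x <- s, y <- t] (i * size t + j) =
  (nth x0.1 s i, nth x0.2 t j).
Proof.
elim: s i => [|a s IH] [|i] // ilt jt; rewrite allpairs_cons nth_cat size_map.
- by rewrite mul0n add0n jt (nth_map x0.2).
- rewrite mulSn -addnA ltnNge leq_addr /= addKn IH //.
Qed.

Lemma mxvec_index_val m n (i : 'I_m) (j : 'I_n) :
  nat_of_ord (mxvec_index i j) = (i * n + j)%N.
Proof.
rewrite /mxvec_index /=.
set s := enum {: 'I_m * 'I_n}.
have us : uniq s by apply: enum_uniq.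
have ss : size s = (m * n)%N by rewrite -cardE card_prod !card_ord.
have E : s = [seq (x, y) | x <- enum 'I_m, y <- enum 'I_n].
  by rewrite /s enumT unlock.
have lt : (i * n + j < size s)%N.
  rewrite ss; apply: (@leq_trans (i * n + n)); first by rewrite ltn_add2l.
  by rewrite -mulSnr leq_mul2r ltn_ord orbT.
have H1 : nth (i, j) s (i * n + j) = (i, j).
  rewrite E -[in X in (_ * X)%N](size_enum_ord n) nth_allpairs_pair ?size_enum_ord //.
  by congr pair; apply: val_inj; rewrite /= nth_enum_ord.
have H2 := nth_enum_rank (i, j) (i, j).
rewrite -/s in H2.
rewrite -[RHS](index_uniq (i, j) lt us) H1.
rewrite -[in RHS]H2 index_uniq //.
by rewrite -cardE ltn_ord.
Qed.

Lemma mxvec_index_div m n (i : 'I_m) (j : 'I_n) : (mxvec_index i j %/ n)%N = i.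
Proof.
rewrite mxvec_index_val divnMDl; last by apply: leq_ltn_trans (ltn_ord j).
by rewrite divn_small ?addn0.
Qed.

Lemma mxvec_index_mod m n (i : 'I_m) (j : 'I_n) : (mxvec_index i j %% n)%N = j.
Proof. by rewrite mxvec_index_val modnMDl modn_small. Qed.

Lemma mxvec_index_inj m n (a b : 'I_m) (i j : 'I_n) :
  (mxvec_index a i == mxvec_index b j) = (a == b) && (i == j).
Proof.
apply/eqP/andP => [h|[/eqP -> /eqP ->] //].
split; apply/eqP; apply: val_inj.
  by rewrite /= -(mxvec_index_div a i) -(mxvec_index_div b j) h.
by rewrite /= -(mxvec_index_mod a i) -(mxvec_index_mod b j) h.
Qed.

Section Part2.
Variable R : realType.
Local Notation C := (R[i]).

Lemma sum_mxvec q d (F : 'I_(q * d) -> C) :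
  \sum_c F c = \sum_(s < q) \sum_(k < d) F (mxvec_index s k).
Proof.
rewrite pair_big /=.
pose h := fun p : 'I_q * 'I_d => mxvec_index p.1 p.2.
pose g := fun c : 'I_(q * d) => enum_val (cast_ord (esym (mxvec_cast q d)) c).
rewrite (reindex h) //.
exists g => [p _|c _]; rewrite /g /h /mxvec_index.
  by rewrite cast_ordK enum_rankK -surjective_pairing.
by rewrite -surjective_pairing enum_valK cast_ordKV.
Qed.

Lemma mblockD d p q (A B : 'M[C]_(p * d, q * d)) l r :
  mblock (A + B) l r = mblock A l r + mblock B l r.
Proof. by apply/matrixP => i j; rewrite !mxE. Qed.

Lemma mblockN d p q (A : 'M[C]_(p * d, q * d)) l r :
  mblock (- A) l r = - mblock A l r.
Proof. by apply/matrixP => i j; rewrite !mxE. Qed.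

Lemma mblock1 d q (l r : 'I_q) :
  mblock (1%:M : 'M[C]_(q * d)) l r = if l == r then 1%:M else 0.
Proof.
apply/matrixP => i j; rewrite !mxE mxvec_index_inj.
by case: (l == r); rewrite ?mxE.
Qed.

Lemma mblockM d p q s (A : 'M[C]_(p * d, q * d)) (B : 'M[C]_(q * d, s * d)) l r :
  mblock (A *m B) l r = \sum_t mblock A l t *m mblock B t r.
Proof.
apply/matrixP => i j; rewrite !mxE summxE sum_mxvec.
by apply: eq_bigr => t _; rewrite !mxE; apply: eq_bigr => k _; rewrite !mxE.
Qed.

Lemma mblock_adj L d p q (X : 'M[C]_(L, p * d)) (Y : 'M[C]_(L, q * d)) l r :
  mblock (adjmx X *m Y) l r = adjmx (colblock X l) *m colblock Y r.
Proof.
by apply/matrixP => i j; rewrite !mxE; apply: eq_bigr => t _; rewrite !mxE.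
Qed.

Lemma colblock_sub L M d (D : 'M[C]_(L, M * d)) (S : {set 'I_M}) a :
  colblock (subblocks D S) a = colblock D (enum_val a).
Proof.
apply/matrixP => i j; rewrite !mxE /selcols; congr (D i (mxvec_index _ _)).
  by congr enum_val; apply: val_inj; rewrite /= mxvec_index_div.
by apply: val_inj; rewrite /= mxvec_index_mod.
Qed.

Lemma specnorm_sum I (r : seq I) (P : pred I) m n (F : I -> 'M[C]_(m, n)) :
  specnorm (\sum_(i <- r | P i) F i) <= \sum_(i <- r | P i) specnorm (F i).
Proof.
elim/big_rec2: _ => [|i y1 y2 _ IH]; first exact: specnorm0.
by apply: le_trans (specnormD _ _) _; rewrite lerD2l.
Qed.

Lemma rho_c_ge0 d p q (A : 'M[C]_(p * d, q * d)) : 0 <= rho_c A.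
Proof. exact: bigmax_ge_id. Qed.

Lemma col_le_rho_c d p q (A : 'M[C]_(p * d, q * d)) r :
  \sum_l specnorm (mblock A l r) <= rho_c A.
Proof. exact: (le_bigmax _ (fun r => \sum_l specnorm (mblock A l r))). Qed.

Lemma rho_c_le d p q (A : 'M[C]_(p * d, q * d)) c : 0 <= c ->
  (forall r, \sum_l specnorm (mblock A l r) <= c) -> rho_c A <= c.
Proof. by move=> hc h; apply: bigmax_le. Qed.

Lemma rho_cD d p q (A B : 'M[C]_(p * d, q * d)) : rho_c (A + B) <= rho_c A + rho_c B.
Proof.
apply: rho_c_le; first by rewrite addr_ge0 ?rho_c_ge0.
move=> r; apply: (@le_trans _ _ (\sum_l (specnorm (mblock A l r) + specnorm (mblock B l r)))).
  by apply: ler_sum => l _; rewrite mblockD specnormD.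
by rewrite big_split /= lerD ?col_le_rho_c.
Qed.

Lemma rho_cN d p q (A : 'M[C]_(p * d, q * d)) : rho_c (- A) <= rho_c A.
Proof.
apply: rho_c_le; first exact: rho_c_ge0.
move=> r; apply: le_trans (col_le_rho_c A r).
by apply: ler_sum => l _; rewrite mblockN specnormN.
Qed.

Lemma rho_c1 d q : rho_c (1%:M : 'M[C]_(q * d)) <= 1.
Proof.
apply: rho_c_le; first exact: ler01.
move=> r; rewrite (bigD1 r) //= mblock1 eqxx big1.
  by rewrite addr0 specnorm1.
move=> l hl; rewrite mblock1 (negbTE hl); apply/eqP; rewrite eq_le specnorm0.
exact: specnorm_ge0.
Qed.

Lemma rho_cM d p q s (A : 'M[C]_(p * d, q * d)) (B : 'M[C]_(q * d, s * d)) :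
  rho_c (A *m B) <= rho_c A * rho_c B.
Proof.
apply: rho_c_le; first by rewrite mulr_ge0 ?rho_c_ge0.
move=> r.
apply: (@le_trans _ _ (\sum_l \sum_t specnorm (mblock A l t) * specnorm (mblock B t r))).
  apply: ler_sum => l _; rewrite mblockM; apply: le_trans (specnorm_sum _ _ _) _.
  by apply: ler_sum => t _; apply: specnormM.
rewrite exchange_big /=.
apply: (@le_trans _ _ (\sum_t rho_c A * specnorm (mblock B t r))).
  apply: ler_sum => t _; rewrite -mulr_suml ler_wpM2r ?specnorm_ge0 //.
  exact: col_le_rho_c.
by rewrite -mulr_sumr ler_wpM2l ?rho_c_ge0 ?col_le_rho_c.
Qed.

Lemma rho_c_eq0 d p q (A : 'M[C]_(p * d, q * d)) : rho_c A <= 0 -> A = 0.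
Proof.
move=> h; apply/matrixP => i j; rewrite mxE.
case/mxvec_indexP: i => l a; case/mxvec_indexP: j => r b.
have hb : specnorm (mblock A l r) <= 0.
  apply: le_trans h; apply: le_trans (col_le_rho_c A r).
  rewrite (bigD1 l) //= lerDl; apply: sumr_ge0 => t _; exact: specnorm_ge0.
by have := specnorm_eq0 hb => /matrixP /(_ a b); rewrite !mxE.
Qed.

End Part2.

Section Part3.
Variable R : realType.
Local Notation C := (R[i]).

Lemma adjmxM m n p (X : 'M[C]_(m, n)) (Y : 'M[C]_(n, p)) :
  adjmx (X *m Y) = adjmx Y *m adjmx X.
Proof.
apply/matrixP => i j; rewrite !mxE rmorph_sum; apply: eq_bigr => k _.
by rewrite !mxE rmorphM mulrC.
Qed.

Lemma adjmxK m n (X : 'M[C]_(m, n)) : adjmx (adjmx X) = X.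
Proof. by apply/matrixP => i j; rewrite !mxE conjcK. Qed.

Lemma adjmx1 n : adjmx (1%:M : 'M[C]_n) = 1%:M.
Proof.
apply/matrixP => i j; rewrite !mxE eq_sym; case: (i == j).
  exact: conjc1.
exact: conjc0.
Qed.

Lemma pinv_eq m n (A : 'M[C]_(m, n)) (G : 'M[C]_(n, m)) :
  G *m A = 1%:M -> adjmx (A *m G) = A *m G -> mp_pinv A = G.
Proof.
move=> hGA hAG; rewrite /mp_pinv; apply: xget_unique.
  split.
  - by rewrite -mulmxA hGA mulmx1.
  - by rewrite hGA mul1mx.
  - exact: hAG.
  - by rewrite hGA adjmx1.
move=> X [h1 h2 h3 h4].
have XA : X *m A = 1%:M.
  have : G *m (A *m (X *m A) - A) = 0 by rewrite mulmxA h1 subrr mulmx0.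
  by rewrite mulmxBr !mulmxA hGA !mul1mx => /eqP; rewrite subr_eq0 => /eqP.
have AXG : A *m X = A *m G.
  have e1 : A *m G = (A *m X) *m (A *m G) by rewrite mulmxA h1.
  rewrite -hAG e1 adjmxM h3 hAG -!mulmxA [G *m (A *m X)]mulmxA hGA mul1mx.
  done.
by rewrite -h2 -mulmxA AXG mulmxA XA mul1mx.
Qed.

End Part3.

Section Part4.
Variable R : realType.
Local Notation C := (R[i]).

Lemma sum_if n (r : 'I_n) (a b : R) :
  \sum_l (if l == r then a else b) = a + (n%:R - 1) * b.
Proof.
rewrite (bigD1 r) //= eqxx.
have e : \sum_(l < n | l != r) (if l == r then a else b) = \sum_(l < n | l != r) b.
  by apply: eq_bigr => l /negbTE ->.
have e2 : \sum_(l < n) b = b + \sum_(l < n | l != r) b by rewrite (bigD1 r).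
have e3 : \sum_(l < n) b = b *+ n by rewrite sumr_const card_ord.
rewrite e; congr (_ + _).
have : \sum_(l < n | l != r) b = b *+ n - b by rewrite -e3 e2 addrAC subrr add0r.
by move=> ->; rewrite -mulr_natl; ring.
Qed.

Lemma specnorm_offdiag n (E : 'M[C]_n) (nu : R) : (0 < n)%N -> 0 <= nu ->
  (forall i, E i i = 0) -> (forall i j, i != j -> cnorm (E i j) <= nu) ->
  specnorm E <= (n%:R - 1) * nu.
Proof.
move=> n0 hnu hd ho.
have hn1 : 0 <= (n%:R - 1 : R) by rewrite subr_ge0 ler1n.
apply: specnorm_le => x hx.
pose w (i j : 'I_n) : R := if j == i then 0 else 1.
have w2 : forall i j, w i j * w i j = w i j by move=> i j; rewrite /w; case: (j == i); rewrite ?mulr0 ?mulr1.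
have w0 : forall i j, 0 <= w i j by move=> i j; rewrite /w; case: (j == i).
have sw : forall i, \sum_j w i j = n%:R - 1.
  by move=> i; rewrite /w sum_if add0r mulr1.
have sw' : forall j, \sum_i w i j = n%:R - 1.
  move=> j; rewrite -(sw j); apply: eq_bigr => i _; rewrite /w /=.
  by rewrite eq_sym.
have rowb : forall i, cnorm ((E *m x) i ord0) ^+ 2 <=
     nu ^+ 2 * ((n%:R - 1) * \sum_j w i j * cnorm (x j ord0) ^+ 2).
  move=> i; rewrite mxE.
  have h1 : cnorm (\sum_j E i j * x j ord0) <=
      nu * \sum_j w i j * (w i j * cnorm (x j ord0)).
    apply: le_trans (cnorm_sum _ _ _) _; rewrite mulr_sumr; apply: ler_sum => j _.
    rewrite cnormM /w; case: eqP => [->|/eqP hji].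
      by rewrite hd cnorm0 !mul0r mulr0.
    by rewrite !mul1r ler_wpM2r ?cnorm_ge0 // ho // eq_sym.
  have h2 : (\sum_j w i j * (w i j * cnorm (x j ord0))) ^+ 2 <=
      (n%:R - 1) * \sum_j w i j * cnorm (x j ord0) ^+ 2.
    have := CS (fun j => w i j) (fun j => w i j * cnorm (x j ord0)).
    have -> : \sum_j w i j ^+ 2 = n%:R - 1 by rewrite -(sw i); apply: eq_bigr => k _; rewrite expr2 w2.
    have -> : \sum_j (w i j * cnorm (x j ord0)) ^+ 2 = \sum_j w i j * cnorm (x j ord0) ^+ 2.
      by apply: eq_bigr => k _; rewrite exprMn expr2 w2.
    done.
  have h0 : 0 <= \sum_j w i j * (w i j * cnorm (x j ord0)).
    by apply: sumr_ge0 => j _; rewrite !mulr_ge0 ?cnorm_ge0.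
  apply: le_trans (_ : (nu * \sum_j w i j * (w i j * cnorm (x j ord0))) ^+ 2 <= _).
    by rewrite ler_pXn2r ?nnegrE ?cnorm_ge0 ?mulr_ge0.
  by rewrite exprMn ler_wpM2l ?sqr_ge0.
apply: (@le_trans _ _ ((n%:R - 1) * nu * vnorm x)); last first.
  by rewrite ler_piMr ?mulr_ge0.
apply: vnorm_le; first by rewrite !mulr_ge0 ?vnorm_ge0.
apply: le_trans (ler_sum _ (fun i _ => rowb i)) _.
rewrite -mulr_sumr -mulr_sumr exchange_big /=.
have -> : \sum_j \sum_i w i j * cnorm (x j ord0) ^+ 2 =
     (n%:R - 1) * vnorm x ^+ 2.
  rewrite vnorm_sqr mulr_sumr; apply: eq_bigr => j _.
  by rewrite -mulr_suml sw'.
rewrite !exprMn le_eqVlt; apply/orP; left; apply/eqP; ring.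
Qed.

End Part4.

Lemma bc_bound (R : realType) Rr M d (D : 'M[R[i]]_(Rr * d, M * d)) (l r : 'I_M) :
  r != l -> specnorm (adjmx (colblock D l) *m colblock D r) / d%:R <= block_coherence D.
Proof.
move=> hrl; rewrite /block_coherence.
apply: le_trans (le_bigmax _ _ l).
exact: (le_bigmax_cond _ (P := fun r => r != l)
   (fun r => specnorm (adjmx (colblock D l) *m colblock D r) / d%:R)).
Qed.

Lemma sc_bound (R : realType) Rr M d (D : 'M[R[i]]_(Rr * d, M * d)) (l : 'I_M) (i j : 'I_d) :
  j != i -> cnorm (\sum_t conjc (D t (mxvec_index l i)) * D t (mxvec_index l j))
     <= sub_coherence D.
Proof.
move=> hji; rewrite /sub_coherence.
apply: le_trans (le_bigmax _ _ l).
apply: le_trans (le_bigmax _ _ i).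
exact: (le_bigmax_cond _ (P := fun j => j != i)
   (fun j => cnorm (\sum_t conjc (D t (mxvec_index l i)) * D t (mxvec_index l j)))).
Qed.

Unset Implicit Arguments.
Local Close Scope complex_scope.
Local Open Scope ring_scope.

Theorem theorem3 (R : realType) (Rr M d k : nat)
  (D : 'M[R[i]]_(Rr * d, M * d)) :
  (forall j : 'I_(M * d), \sum_(i < Rr * d) cnorm (D i j) ^+ 2 = 1) ->
  (forall g : 'cV[R[i]]_(M * d),
      g != 0 -> (#|blk_support g| <= 2 * k)%N -> D *m g != 0) ->
  0 < block_coherence D ->
  (k * d)%:R < ((block_coherence D)^-1 + d%:R
                - (d%:R - 1) * (sub_coherence D / block_coherence D)) / 2 ->
  forall Lambda0 : {set 'I_M}, #|Lambda0| = k ->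
    rho_c (mp_pinv (subblocks D Lambda0) *m subblocks D (~: Lambda0)) < 1.
Proof.
move=> hnorm _ hmu hcond L0 hk.
have d0 : (0 < d)%N.
  rewrite lt0n; apply/negP => /eqP d0.
  have dR : (d%:R : R) = 0 by rewrite d0.
  suff : block_coherence D <= 0 by rewrite leNgt hmu.
  rewrite /block_coherence; apply: bigmax_le => // l _; apply: bigmax_le => // r _.
  by rewrite dR invr0 mulr0.
set mu := block_coherence D in hmu hcond *.
set nu := sub_coherence D in hcond *.
have nu0 : 0 <= nu by apply: bigmax_ge_id.
have [k0|kpos] := posnP k.
  apply: le_lt_trans ltr01; apply: rho_c_le => // r.
  rewrite big1 // => l _; exfalso; have := ltn_ord l; move: (nat_of_ord l) => x; by rewrite hk k0.
set D0 := subblocks D L0.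
set Db := subblocks D (~: L0).
set P := adjmx D0 *m D0.
set A := P - 1%:M.
set a := (d%:R - 1) * nu.
set b := d%:R * mu.
have dpos : (0 : R) < d%:R by rewrite ltr0n.
have a0 : 0 <= a by rewrite mulr_ge0 // subr_ge0 ler1n.
have b0 : 0 <= b by rewrite mulr_ge0 // ltW.
have k1 : (1 : R) <= k%:R by rewrite ler1n.
have hb : forall l r : 'I_M, l != r ->
    specnorm (adjmx (colblock D l) *m colblock D r) <= b.
  move=> l r hlr; have := @bc_bound R Rr M d D l r.
  rewrite eq_sym hlr => /(_ isT); rewrite ler_pdivrMr // mulrC => h; exact: h.
have ha : forall c : 'I_M,
    specnorm (adjmx (colblock D c) *m colblock D c - 1%:M) <= a.
  move=> c; apply: specnorm_offdiag => //.
    move=> i; rewrite !mxE eqxx /=.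
    under eq_bigr => t _ do rewrite !mxE conj_mul_self.
    by rewrite -raddf_sum hnorm subrr.
  move=> i j hij; rewrite !mxE (negbTE hij) subr0.
  under eq_bigr => t _ do rewrite !mxE.
  by apply: sc_bound; rewrite eq_sym.
have alpha_le : rho_c A <= a + (k%:R - 1) * b.
  apply: rho_c_le; first by rewrite addr_ge0 // mulr_ge0 // subr_ge0.
  move=> r; apply: le_trans (_ : \sum_l (if l == r then a else b) <= _); last first.
    by rewrite sum_if hk.
  apply: ler_sum => l _.
  rewrite /A mblockD mblockN mblock1 /P mblock_adj !colblock_sub.
  have [->|hlr] := eqVneq l r; first exact: ha.
  rewrite oppr0 addr0; apply: hb.
  by apply: contra hlr => /eqP /enum_val_inj ->.
have beta_le : rho_c (adjmx D0 *m Db) <= k%:R * b.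
  apply: rho_c_le; first by rewrite mulr_ge0 // ler0n.
  move=> r; apply: le_trans (_ : \sum_(l < #|L0|) b <= _); last first.
    by rewrite sumr_const card_ord hk mulr_natl.
  apply: ler_sum => l _; rewrite mblock_adj !colblock_sub; apply: hb.
  apply/eqP => e; have := enum_valP r; rewrite inE -e.
  by rewrite (enum_valP l).
have key : a + (k%:R - 1) * b + k%:R * b < 1.
  have h1 : 2%:R * (k%:R * d%:R) < mu^-1 + d%:R - (d%:R - 1) * (nu / mu).
    by move: hcond; rewrite natrM ltr_pdivlMr ?ltr0n // mulrC.
  rewrite -(ltr_pM2r hmu) in h1.
  have e : (mu^-1 + d%:R - (d%:R - 1) * (nu / mu)) * mu = 1 + d%:R * mu - (d%:R - 1) * nu.
    by field; rewrite gt_eqF.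
  rewrite e in h1; rewrite /a /b; nra.
have beta0 : 0 <= rho_c (adjmx D0 *m Db) by apply: rho_c_ge0.
have alpha1 : rho_c A < 1 - rho_c (adjmx D0 *m Db).
  lra.
have Pdef : P = A + 1%:M by rewrite /A subrK.
have Punit : P \in unitmx.
  rewrite unitmxE unitfE; apply/negP => /det0P [v vn0 vP].
  pose V : 'M[R[i]]_(#|L0| * d) := \matrix_(i, j) v 0 j.
  have VP : V *m P = 0.
    apply/matrixP => i j; rewrite [RHS]mxE.
    transitivity ((v *m P) 0 j); last by rewrite vP mxE.
    by rewrite !mxE; apply: eq_bigr => t _; rewrite mxE.
  have VA : V = - (V *m A).
    apply/eqP; rewrite -addr_eq0 addrC -{2}[V]mulmx1 -mulmxDr -Pdef VP.
    done.
  have hV : rho_c V <= rho_c V * rho_c A.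
    have e : rho_c V = rho_c (- (V *m A)) by congr rho_c.
    by rewrite [X in X <= _]e; apply: le_trans (rho_cN _) (rho_cM _ _).
  have hV0 : 0 <= rho_c V by apply: rho_c_ge0.
  have hA1 : 0 < 1 - rho_c A.
    by rewrite subr_gt0 (lt_le_trans alpha1) // gerBl.
  have hV1 : rho_c V <= 0.
    have : rho_c V * (1 - rho_c A) <= 0 by rewrite mulrBr mulr1 subr_le0.
    by rewrite pmulr_lle0.
  have V0 := rho_c_eq0 hV1.
  have i0 : (0 < #|L0| * d)%N by rewrite hk muln_gt0 kpos d0.
  move/negP: vn0; apply; apply/eqP/rowP => j.
  move/matrixP: V0 => /(_ (Ordinal i0) j); rewrite !mxE => ->.
  done.
set B := invmx P.
have BP : B *m P = 1%:M by apply: mulVmx.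
have PB : P *m B = 1%:M by apply: mulmxV.
have rhoB : rho_c B * (1 - rho_c A) <= 1.
  have eB : B = 1%:M + - (B *m A).
    apply/eqP; rewrite -subr_eq opprK -{1}[B]mulmx1 -mulmxDr addrC -Pdef BP.
    done.
  have h : rho_c B <= 1 + rho_c B * rho_c A.
    have e : rho_c B = rho_c (1%:M + - (B *m A)) by congr rho_c.
    rewrite [X in X <= _]e; apply: le_trans (rho_cD _ _) _; apply: lerD.
      exact: rho_c1.
    by apply: le_trans (rho_cN _) (rho_cM _ _).
  by rewrite mulrBr mulr1 lerBlDl addrC.
have Padj : adjmx P = P by rewrite /P adjmxM adjmxK.
have Bherm : adjmx B = B.
  have h : P *m adjmx B = 1%:M by rewrite -Padj -adjmxM BP adjmx1.
  by rewrite -[adjmx B]mul1mx -BP -mulmxA h mulmx1.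
set G := B *m adjmx D0.
have GD0 : G *m D0 = 1%:M by rewrite /G -mulmxA -/P BP.
have hG : adjmx (D0 *m G) = D0 *m G.
  by rewrite /G !adjmxM adjmxK Bherm mulmxA.
rewrite (pinv_eq GD0 hG) /G -mulmxA.
apply: le_lt_trans (rho_cM _ _) _.
have rB0 : 0 <= rho_c B by apply: rho_c_ge0.
have [rBz|rBp] := eqVneq (rho_c B) 0.
  by rewrite rBz mul0r ltr01.
have rBpos : 0 < rho_c B by rewrite lt_def rBp rB0.
apply: lt_le_trans rhoB; rewrite ltr_pM2l //; clear -alpha1; lra.
Qed.
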